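(* A \textsc{2-Visits} instance $d_1\le\dots\le d_n$ in which at most two distinct numbers occur can be solved (i.e., it can be decided whether a feasible schedule exists) in $O(n)$ time.
   Context: \textsc{2-Visits}: given a non-decreasing sequence of $n$ positive integers (deadlines) $d_1\le \dots\le d_n$, decide whether there exists a schedule of length $2n$ (an assignment of one visit to each position $1,\dots,2n$) containing exactly two visits of each node $i\in[n]$, such that the first visit of $i$ is at position at most $d_i$ and the second visit of $i$ is at most $d_i$ positions after the first visit of $i$. *)

(* Defs.v *)
From mathcomp Require Import all_boot.
Set Implicit Arguments. Unset Strict Implicit. Unset Printing Implicit Defensive.

(* Instance: a sequence d = [d_1; ...; d_n] of deadlines (node i, 0-indexed,
   has deadline nth 0 d i).  A schedule is a sequence s of length 2n (position
   p, 0-indexed, is position p+1 of the paper) whose entries are nodes in [0,n),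
   each node occurring exactly twice. *)
Definition is_schedule (n : nat) (s : seq nat) : Prop :=
  size s = 2 * n /\ all (fun x => x < n) s /\ forall i, i < n -> count_mem i s = 2.

Definition feasible_schedule (d : seq nat) (s : seq nat) : Prop :=
  is_schedule (size d) s /\
  forall i, i < size d ->
    exists p q, [/\ p < q < size s, nth 0 s p = i, nth 0 s q = i,
                    p.+1 <= nth 0 d i & q - p <= nth 0 d i].

Definition two_visits_instance (d : seq nat) : Prop :=
  sorted leq d /\ all (fun x => 0 < x) d.

Definition two_visits_yes (d : seq nat) : Prop :=
  exists s, feasible_schedule d s.

(* Registers hold natural numbers; the input d is a read-only array with
   unit-cost random access; arithmetic is +, truncated -, and comparisons
   (no multiplication/division, so unit cost is not abusable). *)
Inductive expr : Type :=
| EConst of nat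
| EReg of nat
| ELen
| EInput of expr
| EAdd of expr & expr
| ESub of expr & expr       (* truncated subtraction *)
| ELt of expr & expr
| EEq of expr & expr.

Inductive cmd : Type :=
| CSkip
| CAssign of nat & expr
| CSeq of cmd & cmd
| CIf of expr & cmd & cmd
| CWhile of expr & cmd.

Definition state := nat -> nat.
Definition init_state : state := fun _ => 0.
Definition upd (st : state) (r v : nat) : state :=
  fun x => if x == r then v else st x.

Fixpoint eval (d : seq nat) (st : state) (e : expr) : nat :=
  match e with
  | EConst k => k
  | EReg r => st r
  | ELen => size d
  | EInput e1 => nth 0 d (eval d st e1)
  | EAdd e1 e2 => eval d st e1 + eval d st e2
  | ESub e1 e2 => eval d st e1 - eval d st e2
  | ELt e1 e2 => nat_of_bool (eval d st e1 < eval d st e2)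
  | EEq e1 e2 => nat_of_bool (eval d st e1 == eval d st e2)
  end.

Inductive exec (d : seq nat) : cmd -> state -> state -> nat -> Prop :=
| XSkip st : exec d CSkip st st 1
| XAssign st r e : exec d (CAssign r e) st (upd st r (eval d st e)) 1
| XSeq c1 c2 st st1 st2 t1 t2 :
    exec d c1 st st1 t1 -> exec d c2 st1 st2 t2 ->
    exec d (CSeq c1 c2) st st2 (t1 + t2)
| XIfT e c1 c2 st st' t :
    eval d st e != 0 -> exec d c1 st st' t -> exec d (CIf e c1 c2) st st' t.+1
| XIfF e c1 c2 st st' t :
    eval d st e = 0 -> exec d c2 st st' t -> exec d (CIf e c1 c2) st st' t.+1
| XWhileF e c st :
    eval d st e = 0 -> exec d (CWhile e c) st st 1
| XWhileT e c st st1 st2 t1 t2 :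
    eval d st e != 0 -> exec d c st st1 t1 -> exec d (CWhile e c) st1 st2 t2 ->
    exec d (CWhile e c) st st2 (t1 + t2).+1.

Definition decides_within (P : cmd) (c : nat) (d : seq nat) (Q : Prop) : Prop :=
  exists st t, [/\ exec d P init_state st t, t <= c * (size d).+1 &
                   (st 0 != 0 <-> Q)].

(* Main.v *)
Require Import Defs.
From mathcomp Require Import all_boot.
From mathcomp Require Import zify.
Set Implicit Arguments. Unset Strict Implicit. Unset Printing Implicit Defensive.

Lemma count_lt_iota t N : count (fun i => i < t) (iota 0 N) = minn t N.
Proof.
elim: N => [|N IH]; first by rewrite /= minn0.
rewrite -addn1 iotaD count_cat IH /= add0n addn0.
case: (ltnP N t) => h; lia.
Qed.

Lemma count_split (T : Type) (pr p1 p2 : pred T) (s : seq T) :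
  (forall i, pr i = p1 i || p2 i) -> (forall i, ~~ (p1 i && p2 i)) ->
  count pr s = count p1 s + count p2 s.
Proof.
move=> H1 H2; rewrite -count_predUI.
have -> : count (predI p1 p2) s = 0.
  by rewrite (@eq_count _ _ pred0) ?count_pred0 // => i /=; apply/negbTE/H2.
by rewrite addn0; apply: eq_count => i; rewrite H1.
Qed.

Lemma count_inj_bound (f : nat -> nat) (pr : pred nat) (N lo len : nat) :
  (forall i j, i < N -> j < N -> pr i -> pr j -> f i = f j -> i = j) ->
  (forall i, i < N -> pr i -> lo <= f i < lo + len) ->
  count pr (iota 0 N) <= len.
Proof.
move=> Hinj Hb.
rewrite -size_filter -(size_map f).
have -> : len = size (iota lo len) by rewrite size_iota.
apply: uniq_leq_size.
  rewrite map_inj_in_uniq ?filter_uniq ?iota_uniq //.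
  move=> i j; rewrite !mem_filter !mem_iota /= => /andP[pi hi] /andP[pj hj].
  by apply: Hinj.
move=> y /mapP [i]; rewrite mem_filter mem_iota /= => /andP[pi hi] ->.
by rewrite mem_iota; apply: Hb.
Qed.

Lemma feas_PQ d s : feasible_schedule d s ->
  exists P Q : nat -> nat, forall i, i < size d ->
    [/\ P i < Q i < size s, nth 0 s (P i) = i, nth 0 s (Q i) = i,
        (P i).+1 <= nth 0 d i & Q i - P i <= nth 0 d i].
Proof.
move=> [_ H].
suff: forall N, N <= size d -> exists P Q : nat -> nat, forall i, i < N ->
    [/\ P i < Q i < size s, nth 0 s (P i) = i, nth 0 s (Q i) = i,
        (P i).+1 <= nth 0 d i & Q i - P i <= nth 0 d i].
  by move/(_ (size d) (leqnn _)).
elim=> [|N IH] hN; first by exists (fun _ => 0), (fun _ => 0).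
have [P [Q HPQ]] := IH (ltnW hN).
have [p [q Hpq]] := H N hN.
exists (fun i => if i == N then p else P i), (fun i => if i == N then q else Q i).
move=> i; rewrite ltnS leq_eqVlt => /orP[/eqP ->|hi]; first by rewrite eqxx.
by rewrite (ltn_eqF hi); apply: HPQ.
Qed.

Lemma ident n s (P Q : nat -> nat) :
  (forall i, i < n -> [/\ P i < Q i < 2 * n, nth 0 s (P i) = i & nth 0 s (Q i) = i]) ->
  forall t, t <= 2 * n ->
  count (fun i => P i < t) (iota 0 n) + count (fun i => Q i < t) (iota 0 n) = t.
Proof.
move=> H t ht.
set l := map P (iota 0 n) ++ map Q (iota 0 n).
have ul : uniq l.
  rewrite cat_uniq !map_inj_in_uniq ?iota_uniq ?andbT /=.
  - apply/hasPn => y /mapP [i]; rewrite mem_iota /= => hi ->.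
    apply/mapP => -[j]; rewrite mem_iota /= => hj e.
    have [h1 h2 h3] := H i hi; have [h1' h2' h3'] := H j hj.
    have eij : i = j by rewrite -{1}h3 e h2'.
    by subst j; move: h1; rewrite e ltnn.
  - move=> i j; rewrite !mem_iota /= => hi hj e.
    have [_ _ h3] := H i hi; have [_ _ h3'] := H j hj.
    by rewrite -{1}h3 e h3'.
  - move=> i j; rewrite !mem_iota /= => hi hj e.
    have [_ h2 _] := H i hi; have [_ h2' _] := H j hj.
    by rewrite -{1}h2 e h2'.
have sub : {subset l <= iota 0 (2 * n)}.
  move=> y; rewrite mem_cat => /orP[] /mapP [i]; rewrite mem_iota /= => hi ->;
  rewrite mem_iota /=; have [/andP[h1 h1'] _ _] := H i hi; lia.
have hsz : size (iota 0 (2 * n)) <= size l by rewrite size_cat !size_map !size_iota; lia.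
have [sz eqi] := uniq_min_size ul sub hsz.
have pe : perm_eq l (iota 0 (2 * n)) by apply: uniq_perm => //; exact: iota_uniq.
move/permP: pe => /(_ (fun v => v < t)).
rewrite count_cat !count_map count_lt_iota => ->; lia.
Qed.

Fixpoint gfun (w y L fuel : nat) : nat :=
  match fuel with
  | 0 => minn L y
  | f.+1 => if w <= L then minn w y + gfun w y (L - w) f else minn L y
  end.

Lemma nec_count d s T : feasible_schedule d s ->
  count (fun i => nth 0 d i <= T) (iota 0 (size d)) <= T.
Proof.
move=> F; have [P [Q H]] := feas_PQ F.
apply: (@count_inj_bound P _ _ 0 T).
  move=> i j hi hj _ _ e.
  have [_ h2 _ _ _] := H i hi; have [_ h2' _ _ _] := H j hj.
  by rewrite -{1}h2 e h2'.
move=> i hi /= hT; have [_ _ _ h4 _] := H i hi; lia.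
Qed.

Section Nec.
Variables (d s : seq nat) (n k a b : nat).
Hypothesis Hsz : size d = n.
Hypothesis Hd : forall i, i < n -> nth 0 d i = if i < k then a else b.
Hypothesis Hkn : k <= n.
Hypothesis Han : a < n.
Hypothesis Hnb : n <= b.
Hypothesis Hxk : b - n < k.
Hypothesis F : feasible_schedule d s.

Lemma nec_main : k - (b - n) <= gfun (n - a + (b - n)) ((b - n) + (b - n))
                          (a - (n - a + (b - n))) (a - (n - a + (b - n))).
Proof.
set x := b - n; set w := n - a + x.
have [P [Q H]] := feas_PQ F.
have Hs : size s = 2 * size d by move: F; rewrite /feasible_schedule /is_schedule; case=> -[].
rewrite Hsz in H Hs.
have hdle : forall i, i < n -> nth 0 d i <= b.
  by move=> i hi; rewrite Hd //; case: ifP => _; lia.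
have HP : forall i, i < n -> P i < n + x.
  by move=> i hi; have [_ _ _ h _] := H i hi; have := hdle i hi; lia.
have HQ : forall i, i < n -> Q i <= P i + nth 0 d i.
  by move=> i hi; have [/andP[h1 _] _ _ _ h] := H i hi; lia.
have Hid := @ident n s P Q.
have Hid' : forall t, t <= 2 * n ->
  count (fun i => P i < t) (iota 0 n) + count (fun i => Q i < t) (iota 0 n) = t.
  apply: Hid => i hi; have [h1 h2 h3 _ _] := H i hi; split => //; by rewrite -Hs.
have hx : x < n by lia.
have fE : count (fun i => Q i < n + x) (iota 0 n) = x.
  have := Hid' (n + x) (ltac:(lia)).
  rewrite (@eq_in_count _ _ predT) ?count_predT ?size_iota.
    lia.
  by move=> i; rewrite mem_iota /= => hi; apply: HP.
set late := fun i => n + x <= Q i.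
set cntS := fun lo len => count (fun i => [&& i < k, late i, lo <= P i & P i < lo + len]) (iota 0 n).
have f3 : forall t, count (fun i => late i && (P i < t)) (iota 0 n) + cntS t w <= t.
  move=> t; rewrite /cntS -(@count_split _ (fun i => (late i && (P i < t)) || [&& i < k, late i, t <= P i & P i < t + w])) //; last first.
    move=> i; apply/negP => /andP[/andP[_ h1] /and4P[_ _ h2 _]]; lia.
  apply: (@count_inj_bound Q _ _ (n + x) t).
    move=> i j hi hj _ _ e.
    have [_ _ h3 _ _] := H i hi; have [_ _ h3' _ _] := H j hj.
    by rewrite -{1}h3 e h3'.
  move=> i hi /orP[/andP[hl hp]|/and4P[hik hl hp1 hp2]].
    have := HQ i hi; have := hdle i hi; rewrite /late in hl; lia.
  have := HQ i hi; rewrite Hd // hik; rewrite /late in hl; rewrite /w; lia.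
have f4 : forall t, t <= n + x -> t <= count (fun i => late i && (P i < t)) (iota 0 n) + 2 * x.
  move=> t ht; have := Hid' t (ltac:(lia)).
  have c1 : count (fun i => P i < t) (iota 0 n) <=
            count (fun i => late i && (P i < t)) (iota 0 n) + count (fun i => Q i < n + x) (iota 0 n).
    rewrite -(@count_split _ (fun i => (late i && (P i < t)) || (Q i < n + x))); last first.
      by move=> i; rewrite /late; apply/negP => /andP[/andP[h _] h']; lia.
      by [].
    by apply: sub_count => i /= h; rewrite /late h; case: leqP.
  have c2 : count (fun i => Q i < t) (iota 0 n) <= count (fun i => Q i < n + x) (iota 0 n).
    by apply: sub_count => i /= h; lia.
  lia.
have f5 : forall t, t <= n + x -> cntS t w <= 2 * x.
  by move=> t ht; have := f3 t; have := f4 t ht; lia.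
have f6 : cntS 0 w = 0.
  by have := f3 0; lia.
have f7 : forall lo len, cntS lo len <= len.
  move=> lo len; apply: (@count_inj_bound P _ _ lo len).
    move=> i j hi hj _ _ e.
    have [_ h2 _ _ _] := H i hi; have [_ h2' _ _ _] := H j hj.
    by rewrite -{1}h2 e h2'.
  by move=> i hi /and4P[_ _ h1 h2]; rewrite h1 h2.
have f8 : forall lo l1 l2, cntS lo (l1 + l2) = cntS lo l1 + cntS (lo + l1) l2.
  move=> lo l1 l2; rewrite /cntS; apply: count_split.
    move=> i; case: (i < k) => //=; case: (late i) => //=.
    apply/idP/idP.
      move=> /andP[h1 h2]; apply/orP; case: (ltnP (P i) (lo + l1)) => h;
        [left|right]; apply/andP; split; lia.
    by case/orP => /andP[h1 h2]; apply/andP; split; lia.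
  move=> i; apply/negP => /andP[/and4P[_ _ _ h1] /and4P[_ _ h2 _]]; lia.
have f9 : forall lo l1 l2, l1 <= l2 -> cntS lo l1 <= cntS lo l2.
  move=> lo l1 l2 h; apply: sub_count => i /and4P[-> -> -> h'] /=; lia.
have hw : 0 < w by rewrite /w; lia.
have f10 : forall fuel lo L, L <= fuel -> lo + L <= n + x ->
    cntS lo L <= gfun w (x + x) L fuel.
  elim=> [|f IH] lo L hL hlo /=.
    have := f7 lo L; lia.
  case: ifP => hwL.
    have -> : L = w + (L - w) by lia.
    rewrite f8 addKn; apply: leq_add.
      by rewrite leq_min f7 /=; have := f5 lo (ltac:(lia)); lia.
    apply: IH; lia.
  rewrite leq_min f7 /=; have := f9 lo L w (ltac:(lia)); have := f5 lo (ltac:(lia)); lia.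
have f11 : k - x <= count (fun i => (i < k) && late i) (iota 0 n).
  have c0 : count (fun i => i < k) (iota 0 n) = k by rewrite count_lt_iota; lia.
  have c1 : count (fun i => i < k) (iota 0 n) <=
      count (fun i => (i < k) && late i) (iota 0 n) + count (fun i => Q i < n + x) (iota 0 n).
    rewrite -(@count_split _ (fun i => ((i < k) && late i) || (Q i < n + x))); last first.
      by move=> i; rewrite /late; apply/negP => /andP[/andP[_ h] h']; lia.
      by [].
    by apply: sub_count => i /= ->; rewrite /late /=; case: leqP.
  lia.
have f12 : count (fun i => (i < k) && late i) (iota 0 n) = cntS 0 a.
  apply: eq_in_count => i; rewrite mem_iota /= => hi.
  case hik: (i < k) => //=; case: (late i) => //=.
  have [_ _ _ h _] := H i hi; move: h; rewrite Hd // hik; lia.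
have : cntS 0 a <= cntS 0 w + cntS w (a - w).
  by rewrite -f8; apply: f9; lia.
rewrite f6 add0n => h.
have := f10 (a - w) w (a - w) (leqnn _) (ltac:(rewrite /w; lia)).
lia.
Qed.
End Nec.

Fixpoint pairs x := if x is x'.+1 then pairs x' ++ [:: x'; x'] else [::].

Lemma size_pairs x : size (pairs x) = x + x.
Proof. elim: x => //= x IH; rewrite size_cat IH /=; lia. Qed.

Lemma nth_pairs x e : e < x -> nth 0 (pairs x) (e + e) = e /\ nth 0 (pairs x) (e + e).+1 = e.
Proof.
elim: x => // x IH he /=; rewrite !nth_cat size_pairs.
case: (ltnP e x) => h.
  by rewrite !ifT; [apply: IH| lia| lia].
have -> : e = x by lia.
by rewrite ltnn subnn ifF ?subSnn //; lia.
Qed.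

Lemma count_pairs x v : count_mem v (pairs x) = (v < x) * 2.
Proof.
elim: x => //= x IH; rewrite count_cat IH /=.
case: (ltngtP v x) => h /=.
- lia.
- rewrite ltnS leqNgt h /=; lia.
- rewrite h ltnSn /=; lia.
Qed.

Lemma all_pairs x : all (fun v => v < x) (pairs x).
Proof.
elim: x => //= x IH; rewrite all_cat; apply/andP; split; last by rewrite /= ltnSn.
by apply: (sub_all _ IH) => v /= h; lia.
Qed.

Fixpoint fill (M : seq bool) (As Bs : seq nat) : seq nat :=
  match M with
  | [::] => [::]
  | t :: M' => if t then head 0 As :: fill M' (behead As) Bs
               else head 0 Bs :: fill M' As (behead Bs)
  end.

Lemma size_fill M As Bs : size (fill M As Bs) = size M.
Proof. by elim: M As Bs => //= t M IH As Bs; case: t => /=; rewrite IH. Qed.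

Lemma nth_fill M As Bs i : i < size M ->
  nth 0 (fill M As Bs) i = if nth false M i then nth 0 As (count id (take i M))
                           else nth 0 Bs (count negb (take i M)).
Proof.
elim: M As Bs i => //= t M IH As Bs [|i] hi.
  by case: t => /=; rewrite nth0.
case: t => /=; rewrite IH //; case: (nth false M i) => //=;
  rewrite nth_behead //.
Qed.

Lemma count_fill M As Bs v : size As = count id M -> size Bs = count negb M ->
  count_mem v (fill M As Bs) = count_mem v As + count_mem v Bs.
Proof.
elim: M As Bs => [|t M IH] As Bs /=.
  by case: As => // _; case: Bs.
case: t => /=.
  by case: As => //= a0 As [hA] hB; rewrite IH // addnA.
by case: Bs => //= b0 Bs hA [hB]; rewrite IH // addnCA.
Qed.

Lemma all_fill (p : pred nat) M As Bs : all p As -> all p Bs -> p 0 -> all p (fill M As Bs).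
Proof.
elim: M As Bs => //= t M IH As Bs hA hB h0; case: t => /=.
  case: As hA => [|a0 As] /= hA; first by rewrite h0 IH.
  by case/andP: hA => ha hA; rewrite ha IH.
case: Bs hB => [|b0 Bs] /= hB; first by rewrite h0 IH.
by case/andP: hB => hb hB; rewrite hb IH.
Qed.

Lemma jth (p : pred bool) (M : seq bool) j : j < count p M ->
  exists i, [/\ i < size M, p (nth false M i) & count p (take i M) = j].
Proof.
elim: M j => //= t M IH j.
case ht: (p t) => /=.
  case: j => [|j] hj; first by exists 0; rewrite /= ht.
  have [i [h1 h2 h3]] := IH j (ltac:(lia)).
  by exists i.+1; rewrite /= ht h3.
move=> hj; have [i [h1 h2 h3]] := IH j (ltac:(lia)).
by exists i.+1; rewrite /= ht h3.
Qed.

Lemma count_take_mono (T : Type) (p : pred T) (s : seq T) i i' : i <= i' ->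
  count p (take i s) <= count p (take i' s).
Proof.
move=> h; rewrite -(subnKC h) takeD count_cat; apply: leq_addr.
Qed.

Lemma ivt (p : pred nat) A K : K <= count p (iota 0 A) ->
  exists T, T <= A /\ count p (iota 0 T) = K.
Proof.
elim: A => [|A IH]; first by move=> h; exists 0; split => //=; move: h => /=; lia.
move=> h.
case: (leqP K (count p (iota 0 A))) => h'.
  by have [T [h1 h2]] := IH h'; exists T; split => //; lia.
exists A.+1; split => //.
move: h h'; rewrite -addn1 iotaD count_cat /=; lia.
Qed.

Lemma count_mod_window w y t : 0 < w ->
  count (fun p => p %% w < y) (iota t w) = minn y w.
Proof.
move=> hw; elim: t => [|t IH].
  rewrite -count_lt_iota; apply: eq_in_count => p; rewrite mem_iota /= => hp.
  by rewrite modn_small.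
rewrite -IH.
have e1 : iota t w = t :: iota t.+1 (w - 1).
  by rewrite -{1}(subnKC hw) /=.
have e2 : iota t.+1 w = iota t.+1 (w - 1) ++ [:: t + w].
  rewrite -{1}(subnK hw) iotaD /=; congr (_ ++ [:: _]); lia.
rewrite e1 e2 count_cat /= modnDr; lia.
Qed.

Lemma count_take_mkseq (f : nat -> bool) N i c0 : i <= N ->
  count id (take i (mkseq (fun r => f (c0 + r)) N)) = count f (iota c0 i).
Proof.
move=> h; rewrite /mkseq -map_take take_iota count_map.
rewrite (minn_idPl h) -[c0]addn0 iotaDl count_map addn0.
by apply: eq_count.
Qed.

Lemma mem_iota_nat i lo len : (i \in iota lo len) = (lo <= i) && (i < lo + len).
Proof. by rewrite mem_iota. Qed.

Lemma count_iota_mem i lo len : count_mem i (iota lo len) = if (lo <= i) && (i < lo + len) then 1 else 0.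
Proof. by rewrite count_uniq_mem ?iota_uniq // mem_iota; case: ifP. Qed.

Lemma b2n_and (b1 b2 : bool) : nat_of_bool (b1 && b2) = if b1 then nat_of_bool b2 else 0.
Proof. by case: b1. Qed.

Ltac nthcat := repeat (rewrite nth_cat ?size_iota ?size_cat; case: ifP => ?; try lia).

Lemma two_blocks d k m : size d = k + m ->
  (forall i, i < k -> k <= nth 0 d i) ->
  (forall i, k <= i -> i < k + m -> k + m + k <= nth 0 d i) -> two_visits_yes d.
Proof.
move=> Hsz HA HB.
exists (iota 0 k ++ iota 0 k ++ iota k m ++ iota k m); split.
  rewrite Hsz; split; first by rewrite !size_cat !size_iota; lia.
  split.
    rewrite !all_cat; apply/and4P; split; apply/allP => v; rewrite mem_iota; lia.
  move=> i hi; rewrite !count_cat !count_iota_mem.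
  by repeat (case: ifP => /= ?); lia.
move=> i; rewrite Hsz => hi.
case: (ltnP i k) => h.
  exists i, (k + i); split.
  - rewrite !size_cat !size_iota; lia.
  - by nthcat; rewrite nth_iota.
  - nthcat; rewrite nth_iota; lia.
  - by have := HA i h; lia.
  - by have := HA i h; lia.
exists (k + k + (i - k)), (k + k + m + (i - k)); split.
- rewrite !size_cat !size_iota; lia.
- nthcat; rewrite nth_iota; lia.
- nthcat; rewrite nth_iota; lia.
- by have := HB i h hi; lia.
- by have := HB i h hi; lia.
Qed.

Lemma count_negb_take (M : seq bool) i : i <= size M ->
  count negb (take i M) = i - count id (take i M).
Proof.
move=> h; have := count_predC id (take i M); rewrite size_takel //.
have -> : count (predC id) (take i M) = count negb (take i M) by apply: eq_count.
lia.
Qed.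

Section Gen.
Variables (d : seq nat) (n k m a b x : nat).
Hypothesis Hsz : size d = n.
Hypothesis Hnm : n = k + m.
Hypothesis Hd : forall i, i < n -> nth 0 d i = if i < k then a else b.
Hypothesis Hx1 : 1 <= x.
Hypothesis Hxk : x < k.
Hypothesis Hxc : x <= n - a.
Hypothesis Han : a < n.
Hypothesis Hb : n + x <= b.
Let w := n - a + x.
Let pat := fun p => (w <= p) && (p %% w < x + x).
Hypothesis HK : k - x <= count pat (iota 0 a).

Lemma gen_construct : two_visits_yes d.
Proof.
have [T [HTa HT]] := ivt HK.
set inS := fun p => (p < T) && pat p.
set cI := fun lo len => count inS (iota lo len).
have hw : 0 < w by rewrite /w; lia.
have h2x : x + x <= w by rewrite /w; lia.
have cI_split : forall lo l1 l2, cI lo (l1 + l2) = cI lo l1 + cI (lo + l1) l2.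
  by move=> lo l1 l2; rewrite /cI iotaD count_cat.
have cI_low : forall lo len, lo + len <= w -> cI lo len = 0.
  move=> lo len h; rewrite /cI (@eq_in_count _ _ pred0) ?count_pred0 //.
  move=> p; rewrite mem_iota /inS /pat /= => /andP[_ hp].
  have -> : (w <= p) = false by lia.
  by rewrite andbF.
have cI_high : forall lo len, T <= lo -> cI lo len = 0.
  move=> lo len h; rewrite /cI (@eq_in_count _ _ pred0) ?count_pred0 //.
  move=> p; rewrite mem_iota /inS /pat /= => /andP[hp _].
  have -> : (p < T) = false by lia.
  by [].
have cI_tot : forall N, T <= N -> cI 0 N = k - x.
  move=> N hN; rewrite -(subnKC hN) cI_split (@cI_high (0 + T) (N - T)) ?add0n // addn0 -HT.
  apply: eq_in_count => p; rewrite mem_iota /inS => /andP[_ hp]; rewrite (_ : p < T) //; lia.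
have cI_win : forall t, cI t w <= x + x.
  move=> t; apply: (@leq_trans (count (fun p => p %% w < x + x) (iota t w))).
    by apply: sub_count => p /andP[_ /andP[_ ->]].
  by rewrite count_mod_window //; apply: geq_minl.
have cI_size : forall lo len, cI lo len <= len.
  by move=> lo len; rewrite /cI -{2}(size_iota lo len) count_size.
have inS_w : forall p, inS p -> w <= p < a.
  by move=> p /andP[h1 /andP[h2 _]]; rewrite h2 /=; lia.
set M1 := mkseq (fun i => inS (x + x + i)) (n - x).
set M2 := mkseq (fun r => inS (w + r)) (n - x).
have sM1 : size M1 = n - x by rewrite size_mkseq.
have sM2 : size M2 = n - x by rewrite size_mkseq.
have tM1 : forall i, i <= n - x -> count id (take i M1) = cI (x + x) i.
  by move=> i hi; rewrite /M1 count_take_mkseq.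
have tM2 : forall i, i <= n - x -> count id (take i M2) = cI w i.
  by move=> i hi; rewrite /M2 count_take_mkseq.
have cM1 : count id M1 = k - x.
  rewrite -(take_size M1) sM1 tM1 //.
  have := cI_split 0 (x + x) (n - x); rewrite (@cI_low 0 (x + x)) ?add0n; last by lia.
  rewrite (@cI_tot (x + x + (n - x))); lia.
have cM2 : count id M2 = k - x.
  rewrite -(take_size M2) sM2 tM2 //.
  have := cI_split 0 w (n - x); rewrite (@cI_low 0 w) ?add0n; last by lia.
  rewrite (@cI_tot (w + (n - x))); rewrite /w; lia.
have nM1 : count negb M1 = m.
  by rewrite -(take_size M1) count_negb_take // take_size cM1 sM1; lia.
have nM2 : count negb M2 = m.
  by rewrite -(take_size M2) count_negb_take // take_size cM2 sM2; lia.
set As := iota x (k - x).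
set Bs := iota k m.
have sAs : size As = k - x by rewrite size_iota.
have sBs : size Bs = m by rewrite size_iota.
exists (pairs x ++ fill M1 As Bs ++ fill M2 As Bs).
set s := pairs x ++ fill M1 As Bs ++ fill M2 As Bs.
have ss : size s = 2 * n by rewrite !size_cat size_pairs !size_fill sM1 sM2; lia.
have nthE1 : forall p, p < x + x -> nth 0 s p = nth 0 (pairs x) p.
  by move=> p hp; rewrite nth_cat size_pairs hp.
have nthE2 : forall i, i < n - x -> nth 0 s (x + x + i) = nth 0 (fill M1 As Bs) i.
  move=> i hi; rewrite nth_cat size_pairs ifF; last by lia.
  by rewrite nth_cat size_fill sM1 ifT ?addKn //; lia.
have nthE3 : forall r, r < n - x -> nth 0 s (n + x + r) = nth 0 (fill M2 As Bs) r.
  move=> r hr; rewrite nth_cat size_pairs ifF; last by lia.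
  rewrite nth_cat size_fill sM1 ifF; last by lia.
  congr nth; lia.
have nM1E : forall i, i < n - x -> nth false M1 i = inS (x + x + i).
  by move=> i hi; rewrite /M1 nth_mkseq.
have nM2E : forall r, r < n - x -> nth false M2 r = inS (w + r).
  by move=> r hr; rewrite /M2 nth_mkseq.
split.
  rewrite Hsz; split; first exact: ss.
  split.
    rewrite !all_cat; apply/and3P; split.
    - by apply: (sub_all _ (all_pairs x)) => v /= hv; lia.
    - apply: all_fill; [apply/allP => v; rewrite mem_iota; lia|
                        apply/allP => v; rewrite mem_iota; lia| rewrite /=; lia].
    - apply: all_fill; [apply/allP => v; rewrite mem_iota; lia|
                        apply/allP => v; rewrite mem_iota; lia| rewrite /=; lia].
  move=> i hi; rewrite !count_cat count_pairs !count_fill ?sAs ?sBs ?cM1 ?cM2 ?nM1 ?nM2 //.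
  rewrite !count_iota_mem.
  by repeat (case: ifP => /= ?); lia.
move=> i; rewrite Hsz => hi.
case: (ltnP i x) => hix.
  have : 0 < count pat (iota 0 a) by lia.
  rewrite -has_count => /hasP [p0]; rewrite mem_iota => /andP [_ hpa] /andP[hwp _].
  have [e1 e2] := nth_pairs hix.
  exists (i + i), (i + i).+1; split.
  - rewrite ss; lia.
  - by rewrite nthE1 //; lia.
  - by rewrite nthE1 //; lia.
  - rewrite Hd // ifT; [rewrite /w in hwp; lia| lia].
  - rewrite Hd // ifT; lia.
case: (ltnP i k) => hik.
  have [i1 [hi1 ni1 ci1]] := @jth id M1 (i - x) (ltac:(lia)).
  move: ni1; rewrite nM1E; last by lia.
  set p := x + x + i1 => hp.
  have /andP[hwp hpa] := inS_w _ hp.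
  set r := p - w.
  have hr : r < n - x by rewrite /r /w; lia.
  have nr : nth false M2 r = true.
    by rewrite nM2E // /r subnKC.
  have cr : count id (take r M2) = i - x.
    rewrite tM2; last by lia.
    move: ci1; rewrite tM1; last by lia.
    have e1 := cI_split 0 (x + x) i1; have e2 := cI_split 0 w r.
    rewrite (@cI_low 0 (x + x)) in e1; last by lia.
    rewrite (@cI_low 0 w) in e2; last by lia.
    have : x + x + i1 = w + r by rewrite /r /p; lia.
    rewrite !add0n in e1 e2 => e3.
    by rewrite -e2 -e3 e1.
  exists p, (n + x + r); split.
  - rewrite ss; lia.
  - rewrite /p nthE2; last by rewrite -sM1.
    rewrite nth_fill // ?sM1 // nM1E -?sM1 // -/p hp ci1 nth_iota; lia.
  - rewrite nthE3 // nth_fill ?sM2 // nr cr nth_iota; lia.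
  - rewrite Hd // hik; lia.
  - rewrite Hd // hik /r /w; lia.
have [f1 [hf1 nf1 cf1]] := @jth negb M1 (i - k) (ltac:(lia)).
have [f2 [hf2 nf2 cf2]] := @jth negb M2 (i - k) (ltac:(lia)).
have hf1' : f1 < n - x by rewrite -sM1.
have hf2' : f2 < n - x by rewrite -sM2.
have claim : f2 <= f1 + x + x.
  case: (leqP f2 (f1 + x + x)) => // hlt; exfalso.
  set r0 := f1 + x + x + 1.
  have c1 : count negb (take r0 M2) <= i - k.
    by rewrite -cf2; apply: count_take_mono; lia.
  rewrite count_negb_take ?sM2 in c1; last by lia.
  rewrite tM2 in c1; last by lia.
  rewrite count_negb_take ?sM1 in cf1; last by lia.
  rewrite tM1 in cf1; last by lia.
  have nf1' : inS (x + x + f1) = false.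
    by move: nf1; rewrite (nM1E _ hf1'); case: (inS _).
  have e1 := cI_split 0 w r0.
  rewrite (@cI_low 0 w) ?add0n in e1; last by lia.
  have e2 : w + r0 = x + x + f1 + 1 + w by rewrite /r0; lia.
  rewrite e2 (cI_split 0 (x + x + f1 + 1) w) (cI_split 0 (x + x + f1) 1)
     (cI_split 0 (x + x) f1) !add0n in e1.
  have e3 : cI (x + x + f1) 1 = 0.
    by rewrite /cI /= nf1'.
  rewrite e3 (@cI_low 0 (x + x)) in e1; last by lia.
  have := cI_win (x + x + f1 + 1).
  have := cI_size (x + x) f1.
  lia.
exists (x + x + f1), (n + x + f2); split.
- rewrite ss; lia.
- rewrite nthE2 // nth_fill ?sM1 //.
  have -> : nth false M1 f1 = false by move: nf1; case: (nth false M1 f1).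
  rewrite cf1 nth_iota; lia.
- rewrite nthE3 // nth_fill ?sM2 //.
  have -> : nth false M2 f2 = false by move: nf2; case: (nth false M2 f2).
  rewrite cf2 nth_iota; lia.
- rewrite Hd // ifF; lia.
- rewrite Hd // ifF; lia.
Qed.
End Gen.

Definition decide (d : seq nat) : bool :=
  let n := size d in let a := nth 0 d 0 in let b := nth 0 d (n - 1) in
  let k := count_mem a d in
  if n == 0 then true else if a < k then false else if n <= a then true else
  if b < n then false else
  let x := b - n in if k <= x then true else
  let w := n - a + x in k - x <= gfun w (x + x) (a - w) (a - w).

Lemma gfun_le w y L f : gfun w y L f <= L.
Proof.
elim: f L => [|f IH] L /=; first exact: geq_minl.
case: ifP => h; last exact: geq_minl.
have := IH (L - w); have := geq_minl w y; lia.
Qed.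

Lemma gfun_y0 w L f : gfun w 0 L f = 0.
Proof. by elim: f L => [|f IH] L /=; rewrite ?minn0 //; case: ifP; rewrite ?minn0 ?IH. Qed.

Lemma count_mod_block w y : 0 < w -> forall f j L, L <= f ->
  count (fun p => p %% w < y) (iota (j * w) L) = gfun w y L f.
Proof.
move=> hw; elim=> [|f IH] j L hL /=.
  have -> : L = 0 by lia.
  by rewrite min0n.
case: ifP => h.
  rewrite -(subnKC h) iotaD count_cat count_mod_window // minnC.
  rewrite -mulSnr IH ?addKn //; lia.
rewrite -[j * w]addn0 iotaDl count_map minnC -count_lt_iota.
apply: eq_in_count => i; rewrite mem_iota /= => hi.
by rewrite modnMDl modn_small //; lia.
Qed.

Lemma pattern_count w y a : 0 < w ->
  count (fun p => (w <= p) && (p %% w < y)) (iota 0 a) = gfun w y (a - w) (a - w).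
Proof.
move=> hw; case: (leqP a w) => h.
  rewrite (_ : a - w = 0) /=; last by lia.
  rewrite min0n.
  rewrite (@eq_in_count _ _ pred0) ?count_pred0 // => p; rewrite mem_iota /= => hp.
  have -> : (w <= p) = false by lia.
  by [].
rewrite -{1}(subnKC (ltnW h)) iotaD count_cat.
rewrite (@eq_in_count _ _ pred0 (iota 0 w)) ?count_pred0; last first.
  move=> p; rewrite mem_iota /= => hp.
  have -> : (w <= p) = false by lia.
  by [].
rewrite add0n -(@count_mod_block w y hw (a - w) 1 (a - w) (leqnn _)) mul1n.
apply: eq_in_count => p; rewrite mem_iota => /andP[hp _] /=.
by rewrite hp.
Qed.

Lemma sorted2 (a b : nat) (d : seq nat) : a < b -> sorted leq d ->
  all (fun v => (v == a) || (v == b)) d ->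
  d = nseq (count_mem a d) a ++ nseq (count_mem b d) b.
Proof.
elim: d => //= v d IH hab hs /andP[hv hd].
have hs' : sorted leq d := path_sorted hs.
case/orP: hv => /eqP ev; subst v.
  rewrite eqxx (ltn_eqF hab) /=.
  by rewrite !add0n -(IH hab hs' hd).
have hmin := order_path_min leq_trans hs.
have hall : all (pred1 b) d.
  apply/allP => v hvd; have := allP hd v hvd; have := allP hmin v hvd.
  by move=> /= h1 /orP[/eqP e|//]; lia.
rewrite eqxx (gtn_eqF hab) /= add0n.
have -> : count_mem a d = 0.
  apply/eqP; rewrite -leqn0 leqNgt -has_count; apply/hasPn => v hv /=.
  by have := allP hall v hv => /= /eqP ->; rewrite (gtn_eqF hab).
rewrite (@eq_in_count _ _ predT) ?count_predT /=; last by move=> v /(allP hall).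
by congr (_ :: _); apply/all_pred1P.
Qed.

Lemma count_nth_iota (p : pred nat) d :
  count (fun i => p (nth 0 d i)) (iota 0 (size d)) = count p d.
Proof.
rewrite -[in RHS](mkseq_nth 0 d) /mkseq count_map; apply: eq_count => i //.
Qed.

Lemma decide_correct d : two_visits_instance d -> size (undup d) <= 2 ->
  (decide d <-> two_visits_yes d).
Proof.
move=> [hs hpos] hu.
rewrite /decide.
set n := size d; set a := nth 0 d 0; set b := nth 0 d (n - 1); set k := count_mem a d.
case: (eqVneq n 0) => hn0.
  split => // _; exists [::]; split.
    rewrite /is_schedule -/n hn0; split => //.
  by move=> i; rewrite -/n hn0.
have hn : 0 < n by lia.
have hmono : forall i j, i < n -> j < n -> i <= j -> nth 0 d i <= nth 0 d j.
  move=> i j hi hj hij; exact: (sorted_leq_nth leq_trans leqnn 0 hs).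
have hab : forall i, i < n -> a <= nth 0 d i <= b.
  by move=> i hi; apply/andP; split; apply: hmono => //; lia.
have ain : a \in d by rewrite /a mem_nth.
have bin : b \in d by rewrite /b mem_nth // -/n; lia.
have hval : forall i, i < n -> (nth 0 d i == a) || (nth 0 d i == b).
  move=> i hi; have vin : nth 0 d i \in d by rewrite mem_nth.
  case: (eqVneq (nth 0 d i) a) => //= h1; apply/eqP.
  case: (eqVneq a b) => hab'.
    by have := hab i hi; rewrite -hab' in h1 *; lia.
  apply/eqP; apply: contraT => h2.
  have : size [:: a; b; nth 0 d i] <= size (undup d).
    apply: uniq_leq_size.
      by rewrite /= !inE negb_or hab' eq_sym h1 eq_sym h2.
    by move=> v; rewrite !inE mem_undup => /or3P[] /eqP ->.
  by move=> h; have := leq_trans h hu.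
have cnt_le : forall T, count (fun i => nth 0 d i <= T) (iota 0 n) = count (fun v => v <= T) d.
  by move=> T; exact: (count_nth_iota (fun v => v <= T) d).
case: ifP => hak.
  split => // -[s F]; have := @nec_count d s a F; rewrite -/n cnt_le.
  have -> : count (fun v => v <= a) d = k.
    rewrite /k; apply: eq_in_count => v hv /=.
    have [i hi <-] := nthP 0 hv; have := hab i hi; rewrite eq_sym eqn_leq; by move=> /andP[-> _].
  move: hak; lia.
case: ifP => hna.
  split => // _; apply: (@two_blocks d n 0); first by rewrite addn0.
    by move=> i hi; have := hab i hi; lia.
  by move=> i hi1 hi2; lia.
have hka : k <= a by move: hak; lia.
have han : a < n by move: hna; lia.
have hd_ab : all (fun v => (v == a) || (v == b)) d.
  by apply/allP => v hv; have [i hi <-] := nthP 0 hv; exact: hval.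
have hk1 : 0 < k by rewrite /k -has_count; apply/hasP; exists a => //=.
have hab_lt : a < b.
  case: (ltngtP a b) => // h.
    by have := hab (n - 1) (ltac:(lia)); rewrite -/b; lia.
  have : k = n.
    rewrite /k /n -count_predT; apply: eq_in_count => v hv /=.
    by have := allP hd_ab v hv; rewrite -h orbb eq_sym.
  lia.
set m := count_mem b d.
have hdec := sorted2 hab_lt hs hd_ab; rewrite -/k -/m in hdec.
have hnkm : n = k + m by rewrite /n hdec size_cat !size_nseq.
have Hd : forall i, i < n -> nth 0 d i = if i < k then a else b.
  move=> i hi; rewrite hdec nth_cat size_nseq; case: ifP => h; rewrite nth_nseq ?h //.
  by rewrite ifT //; lia.
case: ifP => hbn.
  split => // -[s F]; have := @nec_count d s b F; rewrite -/n cnt_le.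
  have -> : count (fun v => v <= b) d = n.
    rewrite /n -count_predT; apply: eq_in_count => v hv /=.
    by have [i hi <-] := nthP 0 hv; have := hab i hi; case/andP.
  move: hbn; lia.
case: ifP => hkx.
  split => // _; apply: (@two_blocks d k m); first by rewrite -hnkm.
    by move=> i hi; rewrite Hd ?hi; lia.
  move=> i h1 h2; rewrite Hd; last by lia.
  rewrite ifF; last by lia.
  move: hbn hkx; lia.
have hxk : b - n < k by move: hkx; lia.
have hnb : n <= b by move: hbn; lia.
split.
  move=> H.
  have hx1 : 1 <= b - n.
    case: (posnP (b - n)) => // h0; move: H; rewrite h0 addn0 gfun_y0; lia.
  case: (leqP (b - n) (n - a)) => hxc.
    apply: (@gen_construct d n k m a b (b - n)) => //; try lia.
    by rewrite pattern_count //; lia.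
  apply: (@gen_construct d n k m a b (n - a)) => //; try lia.
  have hg := gfun_le (n - a + (b - n)) (b - n + (b - n))
       (a - (n - a + (b - n))) (a - (n - a + (b - n))).
  have -> : count (fun p => (n - a + (n - a) <= p) && (p %% (n - a + (n - a)) < n - a + (n - a)))
      (iota 0 a) = count (fun p => n - a + (n - a) <= p) (iota 0 a).
    apply: eq_count => p /=; rewrite ltn_pmod ?andbT //; lia.
  have := count_predC (fun p => n - a + (n - a) <= p) (iota 0 a).
  have -> : count (predC (fun p => n - a + (n - a) <= p)) (iota 0 a) =
            count (fun p => p < n - a + (n - a)) (iota 0 a).
    by apply: eq_count => p /=; rewrite -ltnNge.
  rewrite count_lt_iota size_iota; lia.
move=> [s F].
by apply: (@nec_main d s n k a b) => //; lia.
Qed.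

Definition runs d c st (Post : state -> Prop) (B : nat) :=
  exists st' t, [/\ exec d c st st' t, t <= B & Post st'].

Lemma runs_assign d r e st (P : state -> Prop) :
  P (upd st r (eval d st e)) -> runs d (CAssign r e) st P 1.
Proof. by move=> h; exists (upd st r (eval d st e)), 1; split => //; constructor. Qed.

Lemma runs_skip d st (P : state -> Prop) : P st -> runs d CSkip st P 1.
Proof. by move=> h; exists st, 1; split => //; constructor. Qed.

Lemma runs_seq d c1 c2 st P1 P2 B1 B2 :
  runs d c1 st P1 B1 -> (forall st1, P1 st1 -> runs d c2 st1 P2 B2) ->
  runs d (CSeq c1 c2) st P2 (B1 + B2).
Proof.
move=> [st1 [t1 [h1 ht1 hp1]]] H; have [st2 [t2 [h2 ht2 hp2]]] := H st1 hp1.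
exists st2, (t1 + t2); split => //; last exact: leq_add.
by econstructor; eauto.
Qed.

Lemma runs_ifT d e c1 c2 st P B :
  eval d st e != 0 -> runs d c1 st P B -> runs d (CIf e c1 c2) st P B.+1.
Proof.
by move=> he [st' [t [h ht hp]]]; exists st', t.+1; split => //; constructor.
Qed.

Lemma runs_ifF d e c1 c2 st P B :
  eval d st e = 0 -> runs d c2 st P B -> runs d (CIf e c1 c2) st P B.+1.
Proof.
by move=> he [st' [t [h ht hp]]]; exists st', t.+1; split => //; apply: XIfF.
Qed.

Lemma runs_whileF d e c st (P : state -> Prop) :
  eval d st e = 0 -> P st -> runs d (CWhile e c) st P 1.
Proof. by move=> he hp; exists st, 1; split => //; constructor. Qed.

Lemma runs_whileT d e c st P1 P B1 B2 :
  eval d st e != 0 -> runs d c st P1 B1 ->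
  (forall st1, P1 st1 -> runs d (CWhile e c) st1 P B2) ->
  runs d (CWhile e c) st P (B1 + B2).+1.
Proof.
move=> he [st1 [t1 [h1 ht1 hp1]]] H; have [st2 [t2 [h2 ht2 hp2]]] := H st1 hp1.
exists st2, (t1 + t2).+1; split => //; last by rewrite ltnS; exact: leq_add.
by apply: XWhileT; eauto.
Qed.

Lemma runs_weaken d c st (P Q : state -> Prop) B B' :
  B <= B' -> (forall st, P st -> Q st) -> runs d c st P B -> runs d c st Q B'.
Proof.
move=> hB hPQ [st' [t [h ht hp]]]; exists st', t; split => //; last exact: hPQ.
exact: leq_trans hB.
Qed.

Lemma nb_neq0 (b : bool) : (nat_of_bool b != 0) = b.
Proof. by case: b. Qed.

Definition loop1 : cmd :=
  CWhile (ELt (EReg 5) (EReg 1))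
    (CSeq (CIf (EEq (EInput (EReg 5)) (EReg 2)) (CAssign 4 (EAdd (EReg 4) (EConst 1))) CSkip)
          (CAssign 5 (EAdd (EReg 5) (EConst 1)))).

Lemma loop1_runs d : forall j st, st 1 = size d -> st 5 + j = size d ->
  runs d loop1 st (fun st' => [/\ st' 1 = st 1, st' 2 = st 2, st' 3 = st 3 &
                     st' 4 = st 4 + count_mem (st 2) (drop (st 5) d)]) (4 * j + 1).
Proof.
elim=> [|j IH] st h1 h5.
  apply: runs_whileF.
    rewrite /= h1; have -> : st 5 < size d = false by lia.
    by [].
  have -> : st 5 = size d by lia.
  by split => //; rewrite drop_size addn0.
have hi : st 5 < size d by lia.
have -> : 4 * j.+1 + 1 = ((2 + 1) + (4 * j + 1)).+1 by lia.
apply: (@runs_whileT _ _ _ _ (fun st1 => [/\ st1 1 = st 1, st1 2 = st 2, st1 3 = st 3,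
     st1 5 = st 5 + 1 & st1 4 = st 4 + (nth 0 d (st 5) == st 2)])).
- by rewrite /= nb_neq0 h1.
- apply: (@runs_seq _ _ _ _ (fun st1 => [/\ st1 1 = st 1, st1 2 = st 2, st1 3 = st 3,
     st1 5 = st 5 & st1 4 = st 4 + (nth 0 d (st 5) == st 2)])).
    case: (eqVneq (nth 0 d (st 5)) (st 2)) => he.
      apply: runs_ifT; first by rewrite /= nb_neq0 he.
      by apply: runs_assign; rewrite /upd /=.
    apply: runs_ifF; first by rewrite /=; case: eqP => //= h; rewrite h eqxx in he.
    by apply: runs_skip; split => //=; rewrite addn0.
  move=> st1 [e1 e2 e3 e5 e4]; apply: runs_assign.
  by rewrite /upd /= e1 e2 e3 e4 e5.
move=> st1 [e1 e2 e3 e5 e4].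
apply: runs_weaken (IH st1 _ _) => //; try lia.
move=> st' [f1 f2 f3 f4]; split; rewrite ?f1 ?f2 ?f3 ?e1 ?e2 ?e3 //.
rewrite f4 e4 e5 e2 (drop_nth 0 hi) /= addn1; lia.
Qed.

Definition loop2 : cmd :=
  CWhile (ELt (EReg 7) (EAdd (EReg 8) (EConst 1)))
    (CSeq (CAssign 8 (ESub (EReg 8) (EReg 7))) (CAssign 11 (EAdd (EReg 11) (EReg 10)))).

Lemma loop2_runs d w y : 0 < w -> forall fuel st, st 8 <= fuel -> st 7 = w -> st 10 = minn w y ->
  runs d loop2 st (fun st' => [/\ st' 8 < w,
      st' 11 + minn (st' 8) y = st 11 + gfun w y (st 8) fuel,
      st' 4 = st 4, st' 6 = st 6 & st' 9 = st 9]) (3 * st 8 + 1).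
Proof.
move=> hw; elim=> [|f IH] st hL h7 h10.
  have hL0 : st 8 = 0 by lia.
  apply: (@runs_weaken _ _ _ _ _ 1 _ _ (fun s0 h => h)); first lia.
  apply: runs_whileF.
    rewrite /= h7 hL0; have -> : w < 0 + 1 = false by lia.
    by [].
  by split => //; rewrite ?hL0 //= ?min0n.
case: (leqP w (st 8)) => hwl.
  apply: (@runs_weaken _ _ _ _ _ (((1 + 1) + (3 * (st 8 - w) + 1)).+1) _ _ (fun s0 h => h)); first lia.
  apply: (@runs_whileT _ _ _ _ (fun st1 => st1 8 = st 8 - w /\ st1 7 = w /\ st1 10 = minn w y /\
       st1 11 = st 11 + minn w y /\ st1 4 = st 4 /\ st1 6 = st 6 /\ st1 9 = st 9)).
  - rewrite /= nb_neq0 h7; lia.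
  - apply: (@runs_seq _ _ _ _ (fun st1 => st1 8 = st 8 - w /\ st1 7 = w /\ st1 10 = minn w y /\
       st1 11 = st 11 /\ st1 4 = st 4 /\ st1 6 = st 6 /\ st1 9 = st 9)).
      by apply: runs_assign; rewrite /upd /= h7 h10; do !split.
    move=> st1 [e8 [e7 [e10 [e11 [e4 [e6 e9]]]]]]; apply: runs_assign.
    by rewrite /upd /= e8 e7 e10 e11 e4 e6 e9; do !split.
  move=> st1 [e8 [e7 [e10 [e11 [e4 [e6 e9]]]]]].
  apply: runs_weaken (IH st1 _ _ _); rewrite ?e8 //; try lia.
  move=> st' [f1 f2 f3 f4 f5]; split; rewrite ?f3 ?f4 ?f5 ?e4 ?e6 ?e9 //.
  rewrite f2 e11 /=; have -> : (w <= st 8) = true by lia.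
  by rewrite addnA.
apply: (@runs_weaken _ _ _ _ _ 1 _ _ (fun s0 h => h)); first lia.
apply: runs_whileF.
  rewrite /= h7; have -> : w < st 8 + 1 = false by lia.
  by [].
split => //.
by rewrite /= leqNgt hwl.
Qed.

Lemma runs_asgn_seq d r e c st P B B' :
  runs d c (upd st r (eval d st e)) P B -> B.+1 <= B' -> runs d (CSeq (CAssign r e) c) st P B'.
Proof.
move=> h hB; apply: (runs_weaken hB (fun s0 h => h)).
rewrite -add1n; apply: runs_seq; first exact: (runs_assign (P := fun s1 => s1 = upd st r (eval d st e))).
by move=> st1 ->.
Qed.

Lemma runs_asgn_le d r e st (P : state -> Prop) B :
  P (upd st r (eval d st e)) -> 1 <= B -> runs d (CAssign r e) st P B.
Proof. by move=> h hB; apply: (runs_weaken hB (fun s0 h => h)); apply: runs_assign. Qed.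

Lemma runs_ifT_le d e c1 c2 st P B B' :
  eval d st e != 0 -> runs d c1 st P B -> B.+1 <= B' -> runs d (CIf e c1 c2) st P B'.
Proof. by move=> he h hB; apply: (runs_weaken hB (fun s0 h => h)); apply: runs_ifT. Qed.

Lemma runs_ifF_le d e c1 c2 st P B B' :
  eval d st e = 0 -> runs d c2 st P B -> B.+1 <= B' -> runs d (CIf e c1 c2) st P B'.
Proof. by move=> he h hB; apply: (runs_weaken hB (fun s0 h => h)); apply: runs_ifF. Qed.

Lemma runs_seq_le d c1 c2 st P1 P2 B1 B2 B :
  runs d c1 st P1 B1 -> (forall st1, P1 st1 -> runs d c2 st1 P2 B2) -> B1 + B2 <= B ->
  runs d (CSeq c1 c2) st P2 B.
Proof. by move=> h1 h2 hB; apply: (runs_weaken hB (fun s0 h => h)); apply: runs_seq; eauto. Qed.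

Definition main_c : cmd :=
  CSeq (CAssign 7 (EAdd (ESub (EReg 1) (EReg 2)) (EReg 6)))
 (CSeq (CAssign 8 (ESub (EReg 2) (EReg 7)))
 (CSeq (CAssign 9 (EAdd (EReg 6) (EReg 6)))
 (CSeq (CIf (ELt (EReg 7) (EReg 9)) (CAssign 10 (EReg 7)) (CAssign 10 (EReg 9)))
 (CSeq (CAssign 11 (EConst 0))
 (CSeq loop2
 (CSeq (CIf (ELt (EReg 8) (EReg 9)) (CAssign 11 (EAdd (EReg 11) (EReg 8)))
                                   (CAssign 11 (EAdd (EReg 11) (EReg 9))))
       (CAssign 0 (ELt (ESub (EReg 4) (EReg 6)) (EAdd (EReg 11) (EConst 1)))))))))).

Lemma main_runs d st n a b k : st 1 = n -> st 2 = a -> st 4 = k -> st 6 = b - n -> a < n ->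
  runs d main_c st (fun st' => (st' 0 != 0) =
    (k - (b - n) <= gfun (n - a + (b - n)) ((b - n) + (b - n)) (a - (n - a + (b - n)))
                          (a - (n - a + (b - n))))) (3 * a + 20).
Proof.
move=> h1 h2 h4 h6 han.
set x := b - n; set w := n - a + x; set y := x + x; set L := a - w.
apply: (@runs_asgn_seq _ _ _ _ _ _ (3 * a + 19)); last by lia.
apply: (@runs_asgn_seq _ _ _ _ _ _ (3 * a + 18)); last by lia.
apply: (@runs_asgn_seq _ _ _ _ _ _ (3 * a + 17)); last by lia.
set st3 := upd (upd (upd st 7 _) 8 _) 9 _.
have e37 : st3 7 = w by rewrite /st3 /upd /= h1 h2 h6.
have e38 : st3 8 = L by rewrite /st3 /upd /= h1 h2 h6.
have e39 : st3 9 = y by rewrite /st3 /upd /= h6.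
have e34 : st3 4 = k by rewrite /st3 /upd /= h4.
have e36 : st3 6 = x by rewrite /st3 /upd /= h6.
have hw : 0 < w by rewrite /w; lia.
apply: (@runs_seq_le _ _ _ _ (fun s1 => s1 = upd st3 10 (minn w y)) _ 2 (3 * a + 15) (3 * a + 17)); last first.
- lia.
- move=> st4 ->.
  apply: (@runs_asgn_seq _ _ _ _ _ _ (3 * a + 14)); last by lia.
  set st5 := upd (upd st3 10 (minn w y)) 11 _.
  have e57 : st5 7 = w by rewrite /st5 /upd /= e37.
  have e58 : st5 8 = L by rewrite /st5 /upd /= e38.
  have e510 : st5 10 = minn w y by rewrite /st5 /upd /=.
  have e511 : st5 11 = 0 by rewrite /st5 /upd /=.
  apply: (@runs_seq_le _ _ _ _ (fun st' => [/\ st' 8 < w, st' 11 + minn (st' 8) y = 0 + gfun w y L L,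
       st' 4 = k, st' 6 = x & st' 9 = y]) _ (3 * L + 1) 3 (3 * a + 14)); last first.
  + rewrite /L; lia.
  + move=> st6 [f8 f11 f4 f6 f9].
    apply: (@runs_seq_le _ _ _ _ (fun s1 => s1 = upd st6 11 (st6 11 + minn (st6 8) y)) _ 2 1 3);
      last by [].
      case: (ltnP (st6 8) y) => hy.
        apply: (@runs_ifT_le _ _ _ _ _ _ 1); [by rewrite /= nb_neq0 f9| |by []].
        by apply: runs_asgn_le => //=; rewrite /minn hy.
      apply: (@runs_ifF_le _ _ _ _ _ _ 1); [by rewrite /= f9 ltnNge hy| |by []].
      by apply: runs_asgn_le => //=; rewrite f9.
    move=> st7 ->; apply: runs_asgn_le => //.
    rewrite /upd /= nb_neq0 f4 f6 addn1 ltnS f11 add0n.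
    by [].
  + have := @loop2_runs d w y hw (st5 8) st5 (leqnn _) e57 e510.
    rewrite e58; apply: runs_weaken => //.
    move=> s' [g1 g2 g3 g4 g5]; split => //.
    * by rewrite g3 /st5 /upd /= e34.
    * by rewrite g4 /st5 /upd /= e36.
    * by rewrite g5 /st5 /upd /= e39.
- rewrite /minn; case: ifP => hwy.
    apply: (@runs_ifT_le _ _ _ _ _ _ 1); [by rewrite /= nb_neq0 e37 e39| |by []].
    by apply: runs_asgn_le => //=; rewrite e37.
  apply: (@runs_ifF_le _ _ _ _ _ _ 1); [by rewrite /= e37 e39 hwy| |by []].
  by apply: runs_asgn_le => //=; rewrite e39.
Qed.

Definition decide_regs n a b k : bool :=
  if n == 0 then true else if a < k then false else if n <= a then true else
  if b < n then false else if k <= b - n then true else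
  k - (b - n) <= gfun (n - a + (b - n)) ((b - n) + (b - n)) (a - (n - a + (b - n)))
                       (a - (n - a + (b - n))).

Lemma decideE d : decide d = decide_regs (size d) (nth 0 d 0) (nth 0 d (size d - 1))
                                         (count_mem (nth 0 d 0) d).
Proof. by []. Qed.

Definition decide_part : cmd :=
  CIf (EEq (EReg 1) (EConst 0)) (CAssign 0 (EConst 1))
 (CIf (ELt (EReg 2) (EReg 4)) (CAssign 0 (EConst 0))
 (CIf (ELt (EReg 1) (EAdd (EReg 2) (EConst 1))) (CAssign 0 (EConst 1))
 (CIf (ELt (EReg 3) (EReg 1)) (CAssign 0 (EConst 0))
 (CSeq (CAssign 6 (ESub (EReg 3) (EReg 1)))
 (CIf (ELt (EReg 4) (EAdd (EReg 6) (EConst 1))) (CAssign 0 (EConst 1)) main_c))))).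

Lemma decide_part_runs d st n a b k : st 1 = n -> st 2 = a -> st 3 = b -> st 4 = k ->
  runs d decide_part st (fun st' => (st' 0 != 0) = decide_regs n a b k) (3 * n + 30).
Proof.
move=> h1 h2 h3 h4; rewrite /decide_regs.
case: (eqVneq n 0) => hn0.
  apply: (@runs_ifT_le _ _ _ _ _ _ 1); [by rewrite /= nb_neq0 h1 hn0| |lia].
  by apply: runs_asgn_le.
apply: (@runs_ifF_le _ _ _ _ _ _ (3 * n + 29)); [by rewrite /= h1 (negbTE hn0)| |lia].
case: ifP => hak.
  apply: (@runs_ifT_le _ _ _ _ _ _ 1); [by rewrite /= nb_neq0 h2 h4 hak| |lia].
  by apply: runs_asgn_le.
apply: (@runs_ifF_le _ _ _ _ _ _ (3 * n + 28)); [by rewrite /= h2 h4 hak| |lia].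
case: ifP => hna.
  apply: (@runs_ifT_le _ _ _ _ _ _ 1); [by rewrite /= nb_neq0 h1 h2 addn1 ltnS hna| |lia].
  by apply: runs_asgn_le.
apply: (@runs_ifF_le _ _ _ _ _ _ (3 * n + 27)); [by rewrite /= h1 h2 addn1 ltnS hna| |lia].
case: ifP => hbn.
  apply: (@runs_ifT_le _ _ _ _ _ _ 1); [by rewrite /= nb_neq0 h1 h3 hbn| |lia].
  by apply: runs_asgn_le.
apply: (@runs_ifF_le _ _ _ _ _ _ (3 * n + 26)); [by rewrite /= h1 h3 hbn| |lia].
apply: (@runs_asgn_seq _ _ _ _ _ _ (3 * n + 25)); last by lia.
set st1 := upd st 6 _.
have e6 : st1 6 = b - n by rewrite /st1 /upd /= h1 h3.
case: ifP => hkx.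
  apply: (@runs_ifT_le _ _ _ _ _ _ 1); [by rewrite /= nb_neq0 e6 /st1 /upd /= h4 addn1 ltnS hkx| |lia].
  by apply: runs_asgn_le.
apply: (@runs_ifF_le _ _ _ _ _ _ (3 * a + 20)); [by rewrite /= e6 /st1 /upd /= h4 addn1 ltnS hkx| |].
  apply: main_runs => //; rewrite /st1 /upd /= ?h1 ?h2 ?h4 //.
  move: hna; lia.
move: hna; lia.
Qed.

Definition prog : cmd :=
  CSeq (CAssign 1 ELen)
 (CSeq (CAssign 2 (EInput (EConst 0)))
 (CSeq (CAssign 3 (EInput (ESub ELen (EConst 1))))
 (CSeq (CAssign 4 (EConst 0))
 (CSeq (CAssign 5 (EConst 0))
 (CSeq loop1 decide_part))))).

Lemma prog_runs d : runs d prog init_state (fun st' => (st' 0 != 0) = decide d) (7 * size d + 40).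
Proof.
apply: (@runs_asgn_seq _ _ _ _ _ _ (7 * size d + 39)); last by lia.
apply: (@runs_asgn_seq _ _ _ _ _ _ (7 * size d + 38)); last by lia.
apply: (@runs_asgn_seq _ _ _ _ _ _ (7 * size d + 37)); last by lia.
apply: (@runs_asgn_seq _ _ _ _ _ _ (7 * size d + 36)); last by lia.
apply: (@runs_asgn_seq _ _ _ _ _ _ (7 * size d + 35)); last by lia.
set st0 := upd (upd (upd (upd (upd init_state 1 _) 2 _) 3 _) 4 _) 5 _.
have e1 : st0 1 = size d by [].
have e5 : st0 5 = 0 by [].
apply: (@runs_seq_le _ _ _ _ _ _ (4 * size d + 1) (3 * size d + 30)); last by lia.
  apply: loop1_runs => //.
move=> st1 [f1 f2 f3 f4].
rewrite decideE; apply: decide_part_runs => //.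
by rewrite f4 e5 drop0.
Qed.

Theorem theorem4_aux :
  exists (P : cmd) (c : nat),
    forall d : seq nat,
      two_visits_instance d ->
      size (undup d) <= 2 ->
      decides_within P c d (two_visits_yes d).
Proof.
exists prog, 50 => d hi hu.
have [st' [t [hex ht hp]]] := prog_runs d.
exists st', t; split => //.
  apply: (leq_trans ht); lia.
by rewrite hp; apply: decide_correct.
Qed.


Theorem theorem4 :
  exists (P : cmd) (c : nat),
    forall d : seq nat,
      two_visits_instance d ->
      size (undup d) <= 2 ->
      decides_within P c d (two_visits_yes d).
Proof. exact: theorem4_aux. Qed.
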